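(* Let $\Sigma_1\subset E(1,1)$ be a regular surface. At every non-characteristic point of $\Sigma_1$, the Riemannian mean curvature $\mathcal H_L$ of $\Sigma_1$ in $(E(1,1),g_L)$ satisfies $$\lim_{L\to+\infty}\mathcal H_L=X_1(\bar p)+X_2(\bar q).$$
   Context: $E(1,1)$ is modelled on $\mathbb R^3$ with coordinates $(x_1,x_2,x_3)$ and vector fields $X_1=\partial_{x_3}$, $X_2=\frac{1}{\sqrt2}(-e^{x_3}\partial_{x_1}+e^{-x_3}\partial_{x_2})$, $X_3=-\frac1{\sqrt2}(e^{x_3}\partial_{x_1}+e^{-x_3}\partial_{x_2})$, dual forms $\omega_1=dx_3$, $\omega_2=\frac1{\sqrt2}(-e^{-x_3}dx_1+e^{x_3}dx_2)$, $\omega=-\frac1{\sqrt2}(e^{-x_3}dx_1+e^{x_3}dx_2)$. For $L>0$, $g_L=\omega_1\otimes\omega_1+\omega_2\otimes\omega_2+L\,\omega\otimes\omega$ (so $X_1,X_2,\widetilde X_3:=L^{-1/2}X_3$ is orthonormal), $\nabla^L$ its Levi-Civita connection. A regular surface is a Euclidean $C^2$-smooth compact oriented surface $\Sigma_1=\{u=0\}$ with $u$ Euclidean $C^2$ and nonvanishing Euclidean gradient. Put $p=X_1u$, $q=X_2u$, $r=\widetilde X_3u$, $l=\sqrt{p^2+q^2}$, $l_L=\sqrt{p^2+q^2+r^2}$, $\bar p=p/l$, $\bar q=q/l$, $\bar p_L=p/l_L$, $\bar q_L=q/l_L$, $\bar r_L=r/l_L$; non-characteristic means $l\ne0$. There $v_L=\bar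 p_LX_1+\bar q_LX_2+\bar r_L\widetilde X_3$ is the unit normal, $e_1=\bar qX_1-\bar pX_2$, $e_2=\bar r_L\bar pX_1+\bar r_L\bar qX_2-\frac l{l_L}\widetilde X_3$ an orthonormal tangent frame, and $\mathcal H_L=\langle\nabla^L_{e_1}v_L,e_1\rangle_L+\langle\nabla^L_{e_2}v_L,e_2\rangle_L$. *)

(* Defs.v *)
From Stdlib Require Import Reals.
From Coquelicot Require Import Coquelicot.
Open Scope R_scope.

Definition pt := (R * R * R)%type.
Definition comp (x : pt) (i : nat) : R :=
  match i with 0%nat => fst (fst x) | 1%nat => snd (fst x) | _ => snd x end.
Definition vec := nat -> R.
Definition sum3 (F : nat -> R) : R := F 0%nat + F 1%nat + F 2%nat.

Definition shift (x : pt) (t : R) (v : vec) : pt :=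
  (comp x 0 + t * v 0%nat, comp x 1 + t * v 1%nat, comp x 2 + t * v 2%nat).
Definition ev (i : nat) : vec := fun k => if Nat.eqb k i then 1 else 0.

Definition dir_deriv (f : pt -> R) (x : pt) (v : vec) : R :=
  Derive (fun t => f (shift x t v)) 0.
Definition has_partial (i : nat) (f : pt -> R) (x : pt) : Prop :=
  ex_derive (fun t => f (shift x t (ev i))) 0.
Definition partial (i : nat) (f : pt -> R) : pt -> R :=
  fun x => dir_deriv f x (ev i).

Definition C2 (f : pt -> R) : Prop :=
  (forall x, continuous f x) /\
  forall i, (i < 3)%nat ->
    (forall x, has_partial i f x) /\ (forall x, continuous (partial i f) x) /\
    forall j, (j < 3)%nat ->
      (forall x, has_partial j (partial i f) x) /\
      (forall x, continuous (partial j (partial i f)) x).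

(** Regular surface Sigma_1 = {u = 0}: u Euclidean C^2, Sigma_1 compact
    (closed by continuity, and bounded), nonvanishing Euclidean gradient on Sigma_1. *)
Definition regular_surface (u : pt -> R) : Prop :=
  C2 u /\
  (exists M, forall x, u x = 0 -> forall i, (i < 3)%nat -> Rabs (comp x i) <= M) /\
  (forall x, u x = 0 -> exists i, (i < 3)%nat /\ partial i u x <> 0).

Definition vfield := pt -> vec.
Definition X1 : vfield := fun _ => ev 2.
Definition X2 : vfield := fun x k =>
  match k with 0%nat => - exp (comp x 2) / sqrt 2
             | 1%nat => exp (- comp x 2) / sqrt 2 | _ => 0 end.
Definition X3 : vfield := fun x k =>
  match k with 0%nat => - exp (comp x 2) / sqrt 2
             | 1%nat => - exp (- comp x 2) / sqrt 2 | _ => 0 end.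
Definition X3t (L : R) : vfield := fun x k => / sqrt L * X3 x k.

Definition vf_apply (A : vfield) (f : pt -> R) : pt -> R :=
  fun x => dir_deriv f x (A x).

(** Dual one-forms (as covectors in dx1,dx2,dx3). *)
Definition om1 : pt -> vec := fun _ => ev 2.
Definition om2 : pt -> vec := fun x k =>
  match k with 0%nat => - exp (- comp x 2) / sqrt 2
             | 1%nat => exp (comp x 2) / sqrt 2 | _ => 0 end.
Definition om : pt -> vec := fun x k =>
  match k with 0%nat => - exp (- comp x 2) / sqrt 2
             | 1%nat => - exp (comp x 2) / sqrt 2 | _ => 0 end.

Definition gL (L : R) (x : pt) (i j : nat) : R :=
  om1 x i * om1 x j + om2 x i * om2 x j + L * (om x i * om x j).
Definition innerL (L : R) (x : pt) (a b : vec) : R :=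
  sum3 (fun i => sum3 (fun j => gL L x i j * a i * b j)).

Definition m3 (i : nat) : nat := Nat.modulo i 3.
Definition cof (G : nat -> nat -> R) (i j : nat) : R :=
  G (m3 (i+1)) (m3 (j+1)) * G (m3 (i+2)) (m3 (j+2))
  - G (m3 (i+1)) (m3 (j+2)) * G (m3 (i+2)) (m3 (j+1)).
Definition det3 (G : nat -> nat -> R) : R := sum3 (fun j => G 0%nat j * cof G 0%nat j).
Definition inv3 (G : nat -> nat -> R) (i j : nat) : R := cof G j i / det3 G.

Definition christ (L : R) (x : pt) (k i j : nat) : R :=
  / 2 * sum3 (fun l => inv3 (gL L x) k l *
     (partial i (fun y => gL L y j l) x + partial j (fun y => gL L y i l) x
      - partial l (fun y => gL L y i j) x)).

Definition covL (L : R) (A V : vfield) (x : pt) : vec := fun k =>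
  dir_deriv (fun y => V y k) x (A x)
  + sum3 (fun i => sum3 (fun j => christ L x k i j * A x i * V x j)).

Section Quant.
Variable u : pt -> R.
Definition p : pt -> R := vf_apply X1 u.
Definition q : pt -> R := vf_apply X2 u.
Definition r (L : R) : pt -> R := vf_apply (X3t L) u.
Definition l : pt -> R := fun x => sqrt (p x ^ 2 + q x ^ 2).
Definition lL (L : R) : pt -> R := fun x => sqrt (p x ^ 2 + q x ^ 2 + r L x ^ 2).
Definition pbar : pt -> R := fun x => p x / l x.
Definition qbar : pt -> R := fun x => q x / l x.
Definition pbarL (L : R) : pt -> R := fun x => p x / lL L x.
Definition qbarL (L : R) : pt -> R := fun x => q x / lL L x.
Definition rbarL (L : R) : pt -> R := fun x => r L x / lL L x.

Definition vL (L : R) : vfield := fun x k =>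
  pbarL L x * X1 x k + qbarL L x * X2 x k + rbarL L x * X3t L x k.
Definition e1 : vfield := fun x k => qbar x * X1 x k - pbar x * X2 x k.
Definition e2 (L : R) : vfield := fun x k =>
  rbarL L x * pbar x * X1 x k + rbarL L x * qbar x * X2 x k
  - (l x / lL L x) * X3t L x k.

Definition HL (L : R) (x : pt) : R :=
  innerL L x (covL L e1 (vL L) x) (e1 x) + innerL L x (covL L (e2 L) (vL L) x) (e2 L x).
End Quant.

(* Main.v *)
Require Import Defs.
From Stdlib Require Import Reals.
From Coquelicot Require Import Coquelicot.
Open Scope R_scope.
From Stdlib Require Import Lra Lia.
Require Import Defs.
Open Scope R_scope.



Lemma ball_R (a b e : R) : Rabs (b - a) < e -> ball a e b.
Proof. intros H. change (Rabs (b + - a) < e). exact H. Qed.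

Lemma ball_pt (x y : pt) (d : R) :
  Rabs (comp y 0 - comp x 0) < d -> Rabs (comp y 1 - comp x 1) < d ->
  Rabs (comp y 2 - comp x 2) < d -> ball x d y.
Proof.
  destruct x as [[a b] c]; destruct y as [[a' b'] c']; simpl; intros.
  split; [split|]; apply ball_R; assumption.
Qed.

Lemma shift_shift (y : pt) (s h : R) (e : vec) :
  shift (shift y s e) h e = shift y (s + h) e.
Proof. destruct y as [[a b] c]; unfold shift; simpl; f_equal; [f_equal|]; ring. Qed.

Lemma is_derive_comp_R (f g : R -> R) (x df dg : R) :
  is_derive f (g x) df -> is_derive g x dg -> is_derive (fun t => f (g t)) x (dg * df).
Proof. intros H1 H2. exact (is_derive_comp f g x df dg H1 H2). Qed.

Lemma slice_derive (g : pt -> R) (i : nat) (y : pt) (s0 : R) :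
  (forall w, has_partial i g w) ->
  is_derive (fun s => g (shift y s (ev i))) s0 (partial i g (shift y s0 (ev i))).
Proof.
  intros Hp.
  pose (F := fun h => g (shift (shift y s0 (ev i)) h (ev i))).
  assert (HF : is_derive F 0 (partial i g (shift y s0 (ev i)))).
  { unfold F, partial, dir_deriv. apply Derive_correct. apply Hp. }
  apply is_derive_ext with (f := fun s => F (s - s0)).
  { intro t. unfold F. rewrite shift_shift. f_equal. f_equal. ring. }
  replace (partial i g (shift y s0 (ev i))) with (1 * (partial i g (shift y s0 (ev i)))) by ring.
  apply (is_derive_comp_R F (fun s => s - s0)).
  - replace (s0 - s0) with 0 by ring. exact HF.
  - auto_derive; auto; ring.
Qed.

Lemma mvt_slice (g : pt -> R) (i : nat) (y : pt) (a : R) :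
  (forall w, has_partial i g w) ->
  exists c, Rabs c <= Rabs a /\
    g (shift y a (ev i)) - g (shift y 0 (ev i)) = partial i g (shift y c (ev i)) * a.
Proof.
  intros Hp.
  destruct (MVT_gen (fun s => g (shift y s (ev i))) 0 a
     (fun s => partial i g (shift y s (ev i)))) as [c [Hc Heq]].
  - intros s _. apply slice_derive. exact Hp.
  - intros s _.
    assert (Hd: ex_derive (fun s => g (shift y s (ev i))) s) by (eexists; apply slice_derive; exact Hp).
    exact (proj2 (continuity_pt_filterlim _ _) (ex_derive_continuous _ _ Hd)).
  - exists c. split.
    + unfold Rmin, Rmax in Hc. destruct (Rle_dec 0 a);
      unfold Rabs; destruct (Rcase_abs c); destruct (Rcase_abs a); lra.
    + rewrite Heq. ring.
Qed.

Lemma cont_pt (f : pt -> R) (x : pt) (e : R) : continuous f x -> 0 < e ->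
  exists d, 0 < d /\ forall y, Rabs (comp y 0 - comp x 0) < d -> Rabs (comp y 1 - comp x 1) < d ->
     Rabs (comp y 2 - comp x 2) < d -> Rabs (f y - f x) < e.
Proof.
  intros Hc He.
  destruct (proj1 (filterlim_locally f (f x)) Hc (mkposreal e He)) as [d Hd].
  exists d. split. apply cond_pos. intros y H0 H1 H2.
  apply (Hd y (ball_pt x y d H0 H1 H2)).
Qed.

Lemma LD (g : pt -> R) (x : pt) (v : vec) :
  (forall i, (i < 3)%nat -> forall w, has_partial i g w) ->
  (forall i, (i < 3)%nat -> continuous (partial i g) x) ->
  is_derive (fun t => g (shift x t v)) 0 (sum3 (fun i => v i * partial i g x)).
Proof.
  intros Hp Hc.
  apply is_derive_Reals. intros eps Heps.
  set (M := Rabs (v 0%nat) + Rabs (v 1%nat) + Rabs (v 2%nat) + 1).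
  assert (HM : 0 < M) by (unfold M; pose proof (Rabs_pos (v 0%nat)); pose proof (Rabs_pos (v 1%nat)); pose proof (Rabs_pos (v 2%nat)); lra).
  assert (He : 0 < eps / M) by (apply Rdiv_lt_0_compat; lra).
  destruct (cont_pt _ x _ (Hc 0%nat ltac:(lia)) He) as [d0 [Hd0 H0]].
  destruct (cont_pt _ x _ (Hc 1%nat ltac:(lia)) He) as [d1 [Hd1 H1]].
  destruct (cont_pt _ x _ (Hc 2%nat ltac:(lia)) He) as [d2 [Hd2 H2]].
  set (dm := Rmin d0 (Rmin d1 d2)).
  assert (Hdm : 0 < dm) by (unfold dm; repeat apply Rmin_pos; assumption).
  assert (Hdm0 : dm <= d0) by (unfold dm; apply Rmin_l).
  assert (Hdm1 : dm <= d1) by (unfold dm; eapply Rle_trans; [apply Rmin_r| apply Rmin_l]).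
  assert (Hdm2 : dm <= d2) by (unfold dm; eapply Rle_trans; [apply Rmin_r| apply Rmin_r]).
  assert (Hd : 0 < dm / M) by (apply Rdiv_lt_0_compat; lra).
  exists (mkposreal _ Hd). simpl. intros h Hh0 Hh.
  assert (Hhv : forall k, (k < 3)%nat -> Rabs (h * v k) < dm).
  { intros k Hk. rewrite Rabs_mult.
    assert (Rabs (v k) <= M).
    { unfold M; pose proof (Rabs_pos (v 0%nat)); pose proof (Rabs_pos (v 1%nat)); pose proof (Rabs_pos (v 2%nat)).
      destruct k as [|[|[|k]]]; try lra; lia. }
    assert (Rabs h * M < dm).
    { apply Rmult_lt_reg_r with (/ M). apply Rinv_0_lt_compat; lra.
      replace (Rabs h * M * / M) with (Rabs h) by (field; lra). exact Hh. }
    pose proof (Rabs_pos h). nra. }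
  destruct x as [[x0 x1] x2].
  set (A := (x0, x1 + h * v 1%nat, x2 + h * v 2%nat) : pt).
  set (B := (x0, x1, x2 + h * v 2%nat) : pt).
  destruct (mvt_slice g 0 A (h * v 0%nat) (Hp 0%nat ltac:(lia))) as [c0 [Hc0 E0]].
  destruct (mvt_slice g 1 B (h * v 1%nat) (Hp 1%nat ltac:(lia))) as [c1 [Hc1 E1]].
  destruct (mvt_slice g 2 (x0,x1,x2) (h * v 2%nat) (Hp 2%nat ltac:(lia))) as [c2 [Hc2 E2]].
  assert (Q0 : shift A (h * v 0%nat) (ev 0) = shift (x0,x1,x2) (0 + h) v).
  { unfold A, shift, ev; simpl; f_equal; [f_equal|]; ring. }
  assert (Q0' : shift A 0 (ev 0) = A).
  { unfold A, shift, ev; simpl; f_equal; [f_equal|]; ring. }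
  assert (Q1 : shift B (h * v 1%nat) (ev 1) = A).
  { unfold A, B, shift, ev; simpl; f_equal; [f_equal|]; ring. }
  assert (Q1' : shift B 0 (ev 1) = B).
  { unfold B, shift, ev; simpl; f_equal; [f_equal|]; ring. }
  assert (Q2 : shift (x0,x1,x2) (h * v 2%nat) (ev 2) = B).
  { unfold B, shift, ev; simpl; f_equal; [f_equal|]; ring. }
  assert (Q2' : shift (x0,x1,x2) 0 (ev 2) = (x0,x1,x2)).
  { unfold shift, ev; simpl; f_equal; [f_equal|]; ring. }
  assert (Q3 : shift (x0,x1,x2) 0 v = (x0,x1,x2)).
  { unfold shift; simpl; f_equal; [f_equal|]; ring. }
  rewrite Q0, Q0' in E0. rewrite Q1, Q1' in E1. rewrite Q2, Q2' in E2.
  rewrite Q3.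
  set (P0 := shift A c0 (ev 0)) in *.
  set (P1 := shift B c1 (ev 1)) in *.
  set (P2 := shift (x0,x1,x2) c2 (ev 2)) in *.
  assert (Hq : (g (shift (x0, x1, x2) (0 + h) v) - g (x0, x1, x2)) / h =
     v 0%nat * partial 0 g P0 + v 1%nat * partial 1 g P1 + v 2%nat * partial 2 g P2).
  { replace (g (shift (x0, x1, x2) (0 + h) v) - g (x0, x1, x2)) with
     ((g (shift (x0, x1, x2) (0 + h) v) - g A) + (g A - g B) + (g B - g (x0,x1,x2))) by ring.
    rewrite E0, E1, E2. field. exact Hh0. }
  rewrite Hq.
  pose proof (Hhv 0%nat ltac:(lia)) as Hv0.
  pose proof (Hhv 1%nat ltac:(lia)) as Hv1.
  pose proof (Hhv 2%nat ltac:(lia)) as Hv2.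
  assert (B0 : Rabs (partial 0 g P0 - partial 0 g (x0,x1,x2)) < eps / M).
  { apply H0; unfold P0, A, shift, ev; simpl;
    match goal with |- Rabs ?e < _ => idtac end.
    - replace (x0 + c0 * 1 - x0) with c0 by ring. lra.
    - replace (x1 + h * v 1%nat + c0 * 0 - x1) with (h * v 1%nat) by ring. lra.
    - replace (x2 + h * v 2%nat + c0 * 0 - x2) with (h * v 2%nat) by ring. lra. }
  assert (B1 : Rabs (partial 1 g P1 - partial 1 g (x0,x1,x2)) < eps / M).
  { apply H1; unfold P1, B, shift, ev; simpl.
    - replace (x0 + c1 * 0 - x0) with 0 by ring. rewrite Rabs_R0. lra.
    - replace (x1 + c1 * 1 - x1) with c1 by ring. lra.
    - replace (x2 + h * v 2%nat + c1 * 0 - x2) with (h * v 2%nat) by ring. lra. }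
  assert (B2 : Rabs (partial 2 g P2 - partial 2 g (x0,x1,x2)) < eps / M).
  { apply H2; unfold P2, shift, ev; simpl.
    - replace (x0 + c2 * 0 - x0) with 0 by ring. rewrite Rabs_R0. lra.
    - replace (x1 + c2 * 0 - x1) with 0 by ring. rewrite Rabs_R0. lra.
    - replace (x2 + c2 * 1 - x2) with c2 by ring. lra. }
  unfold sum3.
  replace (v 0%nat * partial 0 g P0 + v 1%nat * partial 1 g P1 + v 2%nat * partial 2 g P2 -
    (v 0%nat * partial 0 g (x0, x1, x2) + v 1%nat * partial 1 g (x0, x1, x2) +
     v 2%nat * partial 2 g (x0, x1, x2)))
   with (v 0%nat * (partial 0 g P0 - partial 0 g (x0,x1,x2)) + v 1%nat * (partial 1 g P1 - partial 1 g (x0,x1,x2)) + v 2%nat * (partial 2 g P2 - partial 2 g (x0,x1,x2))) by ring.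
  eapply Rle_lt_trans. apply Rabs_triang.
  eapply Rle_lt_trans. apply Rplus_le_compat_r. apply Rabs_triang.
  rewrite !Rabs_mult.
  assert (eps = M * (eps / M)) by (field; lra).
  pose proof (Rabs_pos (v 0%nat)); pose proof (Rabs_pos (v 1%nat)); pose proof (Rabs_pos (v 2%nat)).
  pose proof (Rabs_pos (partial 0 g P0 - partial 0 g (x0,x1,x2))).
  pose proof (Rabs_pos (partial 1 g P1 - partial 1 g (x0,x1,x2))).
  pose proof (Rabs_pos (partial 2 g P2 - partial 2 g (x0,x1,x2))).
  unfold M in *. nra.
Qed.

Lemma comp2_derive (F : R -> R) (x : pt) (v : vec) (dF : R) :
  is_derive F (comp x 2) dF ->
  is_derive (fun t => F (comp (shift x t v) 2)) 0 (v 2%nat * dF).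
Proof.
  intros H.
  apply (is_derive_comp_R F (fun t => comp x 2 + t * v 2%nat)).
  - replace (comp x 2 + 0 * v 2%nat) with (comp x 2) by ring. exact H.
  - auto_derive; auto; ring.
Qed.

Definition om2w (w : R) (k : nat) : R :=
  match k with 0%nat => - exp (- w) / sqrt 2 | 1%nat => exp w / sqrt 2 | _ => 0 end.
Definition omw (w : R) (k : nat) : R :=
  match k with 0%nat => - exp (- w) / sqrt 2 | 1%nat => - exp w / sqrt 2 | _ => 0 end.
Definition dom2w (w : R) (k : nat) : R :=
  match k with 0%nat => exp (- w) / sqrt 2 | 1%nat => exp w / sqrt 2 | _ => 0 end.
Definition domw (w : R) (k : nat) : R :=
  match k with 0%nat => exp (- w) / sqrt 2 | 1%nat => - exp w / sqrt 2 | _ => 0 end.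
Definition gLw (L w : R) (j l : nat) : R :=
  ev 2 j * ev 2 l + om2w w j * om2w w l + L * (omw w j * omw w l).
Definition dgLw (L w : R) (j l : nat) : R :=
  dom2w w j * om2w w l + om2w w j * dom2w w l + L * (domw w j * omw w l + omw w j * domw w l).

Lemma om2w_der w k : is_derive (fun w => om2w w k) w (dom2w w k).
Proof. destruct k as [|[|k]]; simpl; auto_derive; auto; try field; try (apply Rgt_not_eq, sqrt_lt_R0; lra). Qed.
Lemma omw_der w k : is_derive (fun w => omw w k) w (domw w k).
Proof. destruct k as [|[|k]]; simpl; auto_derive; auto; try field; try (apply Rgt_not_eq, sqrt_lt_R0; lra). Qed.

Lemma gLw_der L w j l : is_derive (fun w => gLw L w j l) w (dgLw L w j l).
Proof.
  assert (Hs : sqrt 2 <> 0) by (apply Rgt_not_eq, sqrt_lt_R0; lra).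
  unfold gLw, dgLw.
  destruct j as [|[|j]]; destruct l as [|[|l]]; simpl; auto_derive; auto; field; auto.
Qed.

Lemma partial_gL L x i j l :
  partial i (fun y => gL L y j l) x = ev i 2%nat * dgLw L (comp x 2) j l.
Proof.
  unfold partial, dir_deriv. apply is_derive_unique.
  apply (comp2_derive (fun w => gLw L w j l) x (ev i)). apply gLw_der.
Qed.

Definition Gam (L a b : R) (k i j : nat) : R :=
  match k, i, j with
  | 2%nat, 0%nat, 0%nat => (1 + L) * b ^ 2
  | 2%nat, 1%nat, 1%nat => - (1 + L) * a ^ 2
  | 0%nat, 2%nat, 0%nat | 0%nat, 0%nat, 2%nat => - (1 + L) ^ 2 / (4 * L)
  | 1%nat, 2%nat, 0%nat | 1%nat, 0%nat, 2%nat => (L * L - 1) * b ^ 2 / (2 * L)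
  | 0%nat, 2%nat, 1%nat | 0%nat, 1%nat, 2%nat => - (L * L - 1) * a ^ 2 / (2 * L)
  | 1%nat, 2%nat, 1%nat | 1%nat, 1%nat, 2%nat => (1 + L) ^ 2 / (4 * L)
  | _, _, _ => 0
  end.

Lemma sqrt2_ne : sqrt 2 <> 0.
Proof. apply Rgt_not_eq, sqrt_lt_R0; lra. Qed.

Lemma exp_neg_al (z : R) : exp (- z) = sqrt 2 / (2 * (exp z / sqrt 2)).
Proof.
  pose proof sqrt2_ne. pose proof (exp_pos z).
  rewrite exp_Ropp.
  replace (sqrt 2 / (2 * (exp z / sqrt 2))) with ((sqrt 2 * sqrt 2) / (2 * exp z)) by (field; split; lra).
  rewrite sqrt_sqrt by lra. field. lra.
Qed.

Lemma neg_div (a b : R) : - a / b = - (a / b).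
Proof. unfold Rdiv; ring. Qed.

Lemma be_al (z : R) : exp (- z) / sqrt 2 = / (2 * (exp z / sqrt 2)).
Proof.
  pose proof sqrt2_ne. pose proof (exp_pos z).
  rewrite exp_neg_al. field. split; lra.
Qed.

Ltac norm_al z :=
  let al := fresh "al" in
  rewrite ?neg_div; rewrite ?(be_al z);
  set (al := exp z / sqrt 2) in *;
  assert (Hal : 0 < al) by (unfold al; apply Rdiv_lt_0_compat; [apply exp_pos| apply sqrt_lt_R0; lra]);
  clearbody al.

Lemma christ_tab L x k i j : 0 < L -> (k < 3)%nat -> (i < 3)%nat -> (j < 3)%nat ->
  christ L x k i j = Gam L (exp (comp x 2) / sqrt 2) (exp (- comp x 2) / sqrt 2) k i j.
Proof.
  intros HL Hk Hi Hj. pose proof sqrt2_ne.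
  unfold christ, sum3. cbv beta. rewrite !partial_gL.
  unfold inv3, det3, cof, sum3, gL, om1, om2, om, dgLw, om2w, omw, dom2w, domw, m3, ev.
  set (z := comp x 2). clearbody z.
  norm_al z.
  destruct k as [|[|[|k]]]; try lia; destruct i as [|[|[|i]]]; try lia;
  destruct j as [|[|[|j]]]; try lia; simpl.
  all: field; repeat split; try lra;
    match goal with |- ?E <> 0 => replace E with (4*L*(al*al)) by ring end;
    assert (0 < 4*L*(al*al)) by (apply Rmult_lt_0_compat; nra); lra.
Qed.




Lemma der_plus (f g : R -> R) x df dg : is_derive f x df -> is_derive g x dg ->
  is_derive (fun t => f t + g t) x (df + dg).
Proof. intros; apply (is_derive_plus f g); auto. Qed.
Lemma der_minus (f g : R -> R) x df dg : is_derive f x df -> is_derive g x dg ->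
  is_derive (fun t => f t - g t) x (df - dg).
Proof. intros; apply (is_derive_minus f g); auto. Qed.
Lemma der_opp (f : R -> R) x df : is_derive f x df ->
  is_derive (fun t => - f t) x (- df).
Proof. intros; apply (is_derive_opp f); auto. Qed.
Lemma der_mult (f g : R -> R) x df dg : is_derive f x df -> is_derive g x dg ->
  is_derive (fun t => f t * g t) x (df * g x + f x * dg).
Proof. intros; apply (is_derive_mult f g); auto. intros; apply Rmult_comm. Qed.
Lemma der_const (c x : R) : is_derive (fun _ => c) x 0.
Proof. apply (is_derive_const c). Qed.
Lemma der_inv (f : R -> R) x df : is_derive f x df -> f x <> 0 ->
  is_derive (fun t => / f t) x (- df / (f x ^ 2)).
Proof.
  intros H Hf. pose proof (is_derive_inv f x df H Hf) as H2.
  eapply is_derive_ext. 2: exact H2. intros; reflexivity.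
Qed.
Lemma der_sqrt (f : R -> R) x df : is_derive f x df -> 0 < f x ->
  is_derive (fun t => sqrt (f t)) x (df / (2 * sqrt (f x))).
Proof.
  intros H Hf.
  pose proof (is_derive_comp_R sqrt f x (/ (2 * sqrt (f x))) df) as H2.
  replace (df / (2 * sqrt (f x))) with (df * / (2 * sqrt (f x))) by (unfold Rdiv; ring).
  apply H2; auto. apply is_derive_Reals. apply derivable_pt_lim_sqrt. exact Hf.
Qed.
Lemma der_eq (f : R -> R) x d d' : is_derive f x d -> d = d' -> is_derive f x d'.
Proof. intros H ->; exact H. Qed.

Definition X2w (w : R) (k : nat) : R :=
  match k with 0%nat => - exp w / sqrt 2 | 1%nat => exp (- w) / sqrt 2 | _ => 0 end.
Definition dX2w (w : R) (k : nat) : R :=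
  match k with 0%nat => - exp w / sqrt 2 | 1%nat => - (exp (- w) / sqrt 2) | _ => 0 end.
Definition X3w (w : R) (k : nat) : R :=
  match k with 0%nat => - exp w / sqrt 2 | 1%nat => - exp (- w) / sqrt 2 | _ => 0 end.
Definition dX3w (w : R) (k : nat) : R :=
  match k with 0%nat => - exp w / sqrt 2 | 1%nat => exp (- w) / sqrt 2 | _ => 0 end.

Lemma X2w_der w k : is_derive (fun w => X2w w k) w (dX2w w k).
Proof. pose proof sqrt2_ne. destruct k as [|[|k]]; simpl; auto_derive; auto; field; auto. Qed.
Lemma X3w_der w k : is_derive (fun w => X3w w k) w (dX3w w k).
Proof. pose proof sqrt2_ne. destruct k as [|[|k]]; simpl; auto_derive; auto; field; auto. Qed.

Lemma X2_line x v k : is_derive (fun t => X2 (shift x t v) k) 0 (v 2%nat * dX2w (comp x 2) k).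
Proof. apply (comp2_derive (fun w => X2w w k)). apply X2w_der. Qed.
Lemma X3_line x v k : is_derive (fun t => X3 (shift x t v) k) 0 (v 2%nat * dX3w (comp x 2) k).
Proof. apply (comp2_derive (fun w => X3w w k)). apply X3w_der. Qed.

Lemma DV_line (x : pt) (w : vec) (V : vfield) (f1 f2 f3 : pt -> R) (d1 d2 d3 : R) k :
  (forall y k, V y k = f1 y * X1 y k + f2 y * X2 y k + f3 y * X3 y k) ->
  is_derive (fun t => f1 (shift x t w)) 0 d1 ->
  is_derive (fun t => f2 (shift x t w)) 0 d2 ->
  is_derive (fun t => f3 (shift x t w)) 0 d3 ->
  dir_deriv (fun y => V y k) x w =
   d1 * ev 2 k + (d2 * X2 x k + f2 x * (w 2%nat * dX2w (comp x 2) k))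
   + (d3 * X3 x k + f3 x * (w 2%nat * dX3w (comp x 2) k)).
Proof.
  intros HV H1 H2 H3. unfold dir_deriv. apply is_derive_unique.
  eapply is_derive_ext. intro t. symmetry. apply HV.
  assert (E : shift x 0 w = x).
  { destruct x as [[a b] c]. unfold shift; simpl; f_equal; [f_equal|]; ring. }
  eapply der_eq.
  apply der_plus. apply der_plus.
  apply der_mult. exact H1. exact (der_const (ev 2 k) 0).
  apply der_mult. exact H2. apply X2_line.
  apply der_mult. exact H3. apply X3_line.
  simpl. rewrite E. unfold X1. ring.
Qed.

Lemma frame (L : R) (x : pt) (A V : vfield) (B : vec) (f1 f2 f3 : pt -> R)
  (a1 a2 a3 b1 b2 b3 d1 d2 d3 : R) : 0 < L ->
  (forall y k, V y k = f1 y * X1 y k + f2 y * X2 y k + f3 y * X3 y k) ->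
  (forall k, A x k = a1 * X1 x k + a2 * X2 x k + a3 * X3 x k) ->
  (forall k, B k = b1 * X1 x k + b2 * X2 x k + b3 * X3 x k) ->
  is_derive (fun t => f1 (shift x t (A x))) 0 d1 ->
  is_derive (fun t => f2 (shift x t (A x))) 0 d2 ->
  is_derive (fun t => f3 (shift x t (A x))) 0 d3 ->
  innerL L x (covL L A V x) B =
   d1 * b1 + d2 * b2 + L * d3 * b3
   + (L - 1) / 2 * (a1 * f2 x * b3 - a1 * f3 x * b2)
   + (L + 1) / 2 * (- a2 * f1 x * b3 + a2 * f3 x * b1 - a3 * f1 x * b2 + a3 * f2 x * b1).
Proof.
  intros HL HV HA HB H1 H2 H3.
  unfold innerL, covL, sum3. cbv beta.
  rewrite !(DV_line x (A x) V f1 f2 f3 d1 d2 d3 _ HV H1 H2 H3).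
  rewrite !christ_tab by (auto; lia).
  rewrite !HA, !HB, !HV.
  unfold Gam, gL, om1, om2, om, X1, X2, X3, dX2w, dX3w, ev.
  set (z := comp x 2). clearbody z. simpl.
  pose proof sqrt2_ne.
  norm_al z.
  field. lra.
Qed.



Lemma C2_hp u (H : C2 u) i : (i < 3)%nat -> forall y, has_partial i u y.
Proof. intros Hi. apply (proj1 ((proj2 H) i Hi)). Qed.
Lemma C2_cp u (H : C2 u) i : (i < 3)%nat -> forall y, continuous (partial i u) y.
Proof. intros Hi. apply (proj1 (proj2 ((proj2 H) i Hi))). Qed.
Lemma C2_hpp u (H : C2 u) k j : (k < 3)%nat -> (j < 3)%nat -> forall y, has_partial j (partial k u) y.
Proof. intros Hk Hj. apply (proj1 (proj2 (proj2 ((proj2 H) k Hk)) j Hj)). Qed.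
Lemma C2_cpp u (H : C2 u) k j : (k < 3)%nat -> (j < 3)%nat -> forall y, continuous (partial j (partial k u)) y.
Proof. intros Hk Hj. apply (proj2 (proj2 (proj2 ((proj2 H) k Hk)) j Hj)). Qed.

Lemma dir_deriv_u u (H : C2 u) y v : dir_deriv u y v = sum3 (fun i => v i * partial i u y).
Proof.
  unfold dir_deriv. apply is_derive_unique. apply LD.
  - intros i Hi. apply C2_hp; auto.
  - intros i Hi. apply C2_cp; auto.
Qed.

Definition aw (w : R) := exp w / sqrt 2.
Definition bw (w : R) := exp (- w) / sqrt 2.
Definition uS (u : pt -> R) (y : pt) := - aw (comp y 2) * partial 0 u y - bw (comp y 2) * partial 1 u y.
Definition uQ (u : pt -> R) (y : pt) := - aw (comp y 2) * partial 0 u y + bw (comp y 2) * partial 1 u y.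

Lemma q_eq u (H : C2 u) y : q u y = uQ u y.
Proof. unfold q, vf_apply. rewrite dir_deriv_u by auto. unfold sum3, X2, uQ, aw, bw; simpl. unfold Rdiv; ring. Qed.
Lemma r_eq u (H : C2 u) L y : r u L y = / sqrt L * uS u y.
Proof. unfold r, vf_apply. rewrite dir_deriv_u by auto. unfold sum3, X3t, X3, uS, aw, bw; simpl. unfold Rdiv; ring. Qed.

Definition Du u x (w : vec) k := sum3 (fun j => w j * partial j (partial k u) x).
Definition DQ u x (w : vec) :=
  - (w 2%nat * aw (comp x 2)) * partial 0 u x - aw (comp x 2) * Du u x w 0
  - (w 2%nat * bw (comp x 2)) * partial 1 u x + bw (comp x 2) * Du u x w 1.
Definition DS u x (w : vec) :=
  - (w 2%nat * aw (comp x 2)) * partial 0 u x - aw (comp x 2) * Du u x w 0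
  + (w 2%nat * bw (comp x 2)) * partial 1 u x - bw (comp x 2) * Du u x w 1.

Lemma line_partial u (H : C2 u) x w k : (k < 3)%nat ->
  is_derive (fun t => partial k u (shift x t w)) 0 (Du u x w k).
Proof.
  intros Hk. apply LD.
  - intros j Hj. apply C2_hpp; auto.
  - intros j Hj. apply C2_cpp; auto.
Qed.

Lemma line_aw x w : is_derive (fun t => aw (comp (shift x t w) 2)) 0 (w 2%nat * aw (comp x 2)).
Proof. apply comp2_derive. unfold aw. pose proof sqrt2_ne. auto_derive; auto. field; auto. Qed.
Lemma line_bw x w : is_derive (fun t => bw (comp (shift x t w) 2)) 0 (w 2%nat * - bw (comp x 2)).
Proof. apply comp2_derive. unfold bw. pose proof sqrt2_ne. auto_derive; auto. field; auto. Qed.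

Lemma shift0 x w : shift x 0 w = x.
Proof. destruct x as [[a b] c]. unfold shift; simpl; f_equal; [f_equal|]; ring. Qed.

Ltac fixeq x := cbv beta; rewrite ?shift0;
  try match goal with |- ?a = ?b => change (@eq R a b) end;
  rewrite ?Rmult_0_l, ?Rplus_0_r; change (snd x) with (comp x 2).

Lemma line_p u (H : C2 u) x w : is_derive (fun t => p u (shift x t w)) 0 (Du u x w 2).
Proof. apply (line_partial u H x w 2). lia. Qed.

Lemma line_q u (H : C2 u) x w : is_derive (fun t => q u (shift x t w)) 0 (DQ u x w).
Proof.
  eapply is_derive_ext. intro t. symmetry. apply q_eq; auto.
  unfold uQ. eapply der_eq.
  apply der_plus. apply der_mult. apply der_opp. apply line_aw. apply line_partial; auto.
  apply der_mult. apply line_bw. apply line_partial; auto.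
  fixeq x. unfold DQ. ring.
Qed.

Lemma line_S u (H : C2 u) x w : is_derive (fun t => uS u (shift x t w)) 0 (DS u x w).
Proof.
  unfold uS. eapply der_eq.
  apply der_minus. apply der_mult. apply der_opp. apply line_aw. apply line_partial; auto.
  apply der_mult. apply line_bw. apply line_partial; auto.
  fixeq x. unfold DS. ring.
Qed.

Lemma der_sq (f : R -> R) x df : is_derive f x df -> is_derive (fun t => f t ^ 2) x (2 * f x * df).
Proof.
  intros H.
  assert (H2 : is_derive (fun t => f t * f t) x (df * f x + f x * df)) by (apply der_mult; auto).
  eapply der_eq. eapply is_derive_ext. 2: exact H2. intro t; simpl; ring. simpl; ring.
Qed.

Lemma lL_eq u (H : C2 u) L y : lL u L y = sqrt (p u y ^ 2 + q u y ^ 2 + (/ sqrt L * uS u y) ^ 2).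
Proof. unfold lL. rewrite r_eq; auto. Qed.

Definition Dlam u L x w :=
  (2 * p u x * Du u x w 2 + 2 * q u x * DQ u x w + 2 * (/ sqrt L * uS u x) * (/ sqrt L * DS u x w))
  / (2 * lL u L x).

Lemma line_lL u (H : C2 u) L x w : 0 < p u x ^ 2 + q u x ^ 2 + (/ sqrt L * uS u x) ^ 2 ->
  is_derive (fun t => lL u L (shift x t w)) 0 (Dlam u L x w).
Proof.
  intros Hpos.
  eapply is_derive_ext. intro t. symmetry. apply lL_eq; auto.
  eapply der_eq. apply der_sqrt.
  apply der_plus. apply der_plus. apply der_sq. apply line_p; auto. apply der_sq. apply line_q; auto.
  apply der_sq. eapply der_eq. apply der_mult. apply der_const. apply line_S; auto.
  all: fixeq x.
  - reflexivity.
  - simpl in Hpos. exact Hpos.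
  - unfold Dlam. rewrite (lL_eq u H L x). simpl.
    simpl in Hpos. pose proof (sqrt_lt_R0 _ Hpos). set (iL := / sqrt L) in *. field. lra.
Qed.

Lemma der_div (f g : R -> R) x df dg : is_derive f x df -> is_derive g x dg -> g x <> 0 ->
  is_derive (fun t => f t / g t) x (df / g x - f x * dg / g x ^ 2).
Proof.
  intros Hf Hg Hz. eapply der_eq. apply der_mult. exact Hf. apply der_inv. exact Hg. exact Hz.
  simpl. field. exact Hz.
Qed.

Lemma lL_pos u (H : C2 u) L x : 0 < p u x ^ 2 + q u x ^ 2 + (/ sqrt L * uS u x) ^ 2 -> 0 < lL u L x.
Proof. intros Hp. rewrite lL_eq; auto. apply sqrt_lt_R0; auto. Qed.

Lemma line_f1 u (H : C2 u) L x w : 0 < p u x ^ 2 + q u x ^ 2 + (/ sqrt L * uS u x) ^ 2 ->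
  is_derive (fun t => pbarL u L (shift x t w)) 0
    (Du u x w 2 / lL u L x - p u x * Dlam u L x w / lL u L x ^ 2).
Proof.
  intros Hp. pose proof (lL_pos u H L x Hp).
  eapply der_eq. apply (der_div (fun t => p u (shift x t w)) (fun t => lL u L (shift x t w))).
  apply line_p; auto. apply line_lL; auto. simpl. rewrite shift0. lra.
  fixeq x. reflexivity.
Qed.

Lemma line_f2 u (H : C2 u) L x w : 0 < p u x ^ 2 + q u x ^ 2 + (/ sqrt L * uS u x) ^ 2 ->
  is_derive (fun t => qbarL u L (shift x t w)) 0
    (DQ u x w / lL u L x - q u x * Dlam u L x w / lL u L x ^ 2).
Proof.
  intros Hp. pose proof (lL_pos u H L x Hp).
  eapply der_eq. apply (der_div (fun t => q u (shift x t w)) (fun t => lL u L (shift x t w))).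
  apply line_q; auto. apply line_lL; auto. simpl. rewrite shift0. lra.
  fixeq x. reflexivity.
Qed.

Lemma line_f3 u (H : C2 u) L x w : 0 < p u x ^ 2 + q u x ^ 2 + (/ sqrt L * uS u x) ^ 2 ->
  is_derive (fun t => rbarL u L (shift x t w) * / sqrt L) 0
    ((/ sqrt L * DS u x w / lL u L x - / sqrt L * uS u x * Dlam u L x w / lL u L x ^ 2) * / sqrt L).
Proof.
  intros Hp. pose proof (lL_pos u H L x Hp).
  eapply der_eq. apply der_mult. 2: apply der_const.
  apply (is_derive_ext (fun t => / sqrt L * uS u (shift x t w) / lL u L (shift x t w))).
  intro t. unfold rbarL. rewrite r_eq; auto.
  apply (der_div (fun t => / sqrt L * uS u (shift x t w)) (fun t => lL u L (shift x t w))).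
  eapply der_eq. apply der_mult. apply der_const. apply line_S; auto. fixeq x. reflexivity.
  apply line_lL; auto. simpl. rewrite shift0. lra.
  fixeq x. unfold Rdiv. ring.
Qed.

Definition Dl u x w := (2 * p u x * Du u x w 2 + 2 * q u x * DQ u x w) / (2 * l u x).

Lemma l_pos u x : l u x <> 0 -> 0 < p u x ^ 2 + q u x ^ 2.
Proof.
  intros Hn. destruct (Rle_lt_dec (p u x ^ 2 + q u x ^ 2) 0) as [Hle|Hlt]; auto.
  exfalso. apply Hn. unfold l. apply sqrt_neg_0. exact Hle.
Qed.

Lemma line_l u (H : C2 u) x w : l u x <> 0 ->
  is_derive (fun t => l u (shift x t w)) 0 (Dl u x w).
Proof.
  intros Hn. pose proof (l_pos u x Hn) as Hpos.
  unfold l at 1.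
  eapply der_eq. apply der_sqrt.
  apply der_plus. apply der_sq. apply line_p; auto. apply der_sq. apply line_q; auto.
  all: fixeq x.
  - exact Hpos.
  - unfold Dl. unfold l. reflexivity.
Qed.

Lemma line_pbar u (H : C2 u) x w : l u x <> 0 ->
  is_derive (fun t => pbar u (shift x t w)) 0 (Du u x w 2 / l u x - p u x * Dl u x w / l u x ^ 2).
Proof.
  intros Hn.
  eapply der_eq. apply (der_div (fun t => p u (shift x t w)) (fun t => l u (shift x t w))).
  apply line_p; auto. apply line_l; auto. cbv beta. rewrite shift0. exact Hn.
  fixeq x. reflexivity.
Qed.

Lemma line_qbar u (H : C2 u) x w : l u x <> 0 ->
  is_derive (fun t => qbar u (shift x t w)) 0 (DQ u x w / l u x - q u x * Dl u x w / l u x ^ 2).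
Proof.
  intros Hn.
  eapply der_eq. apply (der_div (fun t => q u (shift x t w)) (fun t => l u (shift x t w))).
  apply line_q; auto. apply line_l; auto. cbv beta. rewrite shift0. exact Hn.
  fixeq x. reflexivity.
Qed.



Definition lamE u x (e : R) := sqrt (p u x ^ 2 + q u x ^ 2 + (e * uS u x) ^ 2).
Definition DlamE u x e (w : vec) :=
  (p u x * Du u x w 2 + q u x * DQ u x w + e ^ 2 * uS u x * DS u x w) / lamE u x e.
Definition g1 u x e w := (Du u x w 2 * lamE u x e - p u x * DlamE u x e w) / lamE u x e ^ 2.
Definition g2 u x e w := (DQ u x w * lamE u x e - q u x * DlamE u x e w) / lamE u x e ^ 2.
Definition g3 u x e w := (DS u x w * lamE u x e - uS u x * DlamE u x e w) / lamE u x e ^ 2.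
Definition what u x e : vec := fun k =>
  uS u x / lamE u x e * pbar u x * X1 x k + uS u x / lamE u x e * qbar u x * X2 x k
  - l u x / lamE u x e * X3 x k.
Definition Phi u x e :=
  let lam := lamE u x e in
  let pb := pbar u x in let qb := qbar u x in
  let sg := uS u x / lam in let m := l u x / lam in
  let f1 := p u x / lam in let f2 := q u x / lam in let f3 := e ^ 2 * uS u x / lam in
  let w1 := e1 u x in let wh := what u x e in
  (qb * g1 u x e w1 - pb * g2 u x e w1 - f3 * pb * qb)
  + (e ^ 2 * sg * (pb * g1 u x e wh + qb * g2 u x e wh) - m * e ^ 2 * g3 u x e wh
     + (1 - e ^ 2) / 2 * (- sg * pb * m * f2 - sg ^ 2 * pb * qb * f3)
     + (1 + e ^ 2) / 2 * (2 * m * sg * qb * f1 - m * sg * pb * f2 + sg ^ 2 * pb * qb * f3)).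

Lemma HL_eq u (H : C2 u) x L : 0 < L -> l u x <> 0 -> HL u L x = Phi u x (/ sqrt L).
Proof.
  intros HLp Hn.
  assert (Hpos : 0 < p u x ^ 2 + q u x ^ 2 + (/ sqrt L * uS u x) ^ 2).
  { pose proof (l_pos u x Hn). pose proof (pow2_ge_0 (/ sqrt L * uS u x)). lra. }
  assert (HV : forall y k, vL u L y k = pbarL u L y * X1 y k + qbarL u L y * X2 y k
                 + (rbarL u L y * / sqrt L) * X3 y k).
  { intros. unfold vL, X3t. ring. }
  unfold HL.
  rewrite (frame L x (e1 u) (vL u L) (e1 u x) (pbarL u L) (qbarL u L) (fun y => rbarL u L y * / sqrt L)
     (qbar u x) (- pbar u x) 0 (qbar u x) (- pbar u x) 0 _ _ _ HLp HV
     ltac:(intro; unfold e1; ring) ltac:(intro; unfold e1; ring)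
     (line_f1 u H L x _ Hpos) (line_f2 u H L x _ Hpos) (line_f3 u H L x _ Hpos)).
  rewrite (frame L x (e2 u L) (vL u L) (e2 u L x) (pbarL u L) (qbarL u L) (fun y => rbarL u L y * / sqrt L)
     (rbarL u L x * pbar u x) (rbarL u L x * qbar u x) (- (l u x / lL u L x) * / sqrt L)
     (rbarL u L x * pbar u x) (rbarL u L x * qbar u x) (- (l u x / lL u L x) * / sqrt L) _ _ _ HLp HV
     ltac:(intro; unfold e2, X3t; ring) ltac:(intro; unfold e2, X3t; ring)
     (line_f1 u H L x _ Hpos) (line_f2 u H L x _ Hpos) (line_f3 u H L x _ Hpos)).
  unfold Phi, g1, g2, g3, DlamE, Dlam, what, e1, e2, pbarL, qbarL, rbarL, pbar, qbar.
  assert (Hlam : 0 < lamE u x (/ sqrt L)) by (unfold lamE; apply sqrt_lt_R0; exact Hpos).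
  rewrite (r_eq u H L x). rewrite (lL_eq u H L x). fold (lamE u x (/ sqrt L)).
  unfold DQ, DS, Du, X3t, X1, X2, X3, sum3, ev, aw, bw. simpl.
  set (z := snd x). pose proof sqrt2_ne. norm_al z.
  assert (Hc: 0 < sqrt L) by (apply sqrt_lt_R0; lra).
  assert (HLc : L = sqrt L * sqrt L) by (rewrite sqrt_sqrt; lra).
  set (lam := lamE u x (/ sqrt L)) in *. clearbody lam.
  set (c := sqrt L) in *. clearbody c. subst L.
  field. repeat split; try lra; auto.
Qed.

Lemma cp_plus (f g : R -> R) x : continuity_pt f x -> continuity_pt g x -> continuity_pt (fun t => f t + g t) x.
Proof. intros H1 H2. exact (continuity_pt_plus f g x H1 H2). Qed.
Lemma cp_minus (f g : R -> R) x : continuity_pt f x -> continuity_pt g x -> continuity_pt (fun t => f t - g t) x.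
Proof. intros H1 H2. exact (continuity_pt_minus f g x H1 H2). Qed.
Lemma cp_mult (f g : R -> R) x : continuity_pt f x -> continuity_pt g x -> continuity_pt (fun t => f t * g t) x.
Proof. intros H1 H2. exact (continuity_pt_mult f g x H1 H2). Qed.
Lemma cp_opp (f : R -> R) x : continuity_pt f x -> continuity_pt (fun t => - f t) x.
Proof. intros H1. exact (continuity_pt_opp f x H1). Qed.
Lemma cp_div (f g : R -> R) x : continuity_pt f x -> continuity_pt g x -> g x <> 0 -> continuity_pt (fun t => f t / g t) x.
Proof. intros H1 H2 H3. exact (continuity_pt_div f g x H1 H2 H3). Qed.
Lemma cp_inv (f : R -> R) x : continuity_pt f x -> f x <> 0 -> continuity_pt (fun t => / f t) x.
Proof. intros H1 H3. exact (continuity_pt_inv f x H1 H3). Qed.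
Lemma cp_const (c x : R) : continuity_pt (fun _ => c) x.
Proof. apply continuity_pt_const. intros a b; reflexivity. Qed.
Lemma cp_id (x : R) : continuity_pt (fun t => t) x.
Proof. apply derivable_continuous_pt. apply derivable_pt_id. Qed.
Lemma cp_pow (f : R -> R) x n : continuity_pt f x -> continuity_pt (fun t => f t ^ n) x.
Proof.
  intros H. induction n as [|n IH]. exact (cp_const 1 x).
  exact (cp_mult f (fun t => f t ^ n) x H IH).
Qed.
Lemma cp_sqrt (f : R -> R) x : continuity_pt f x -> 0 < f x -> continuity_pt (fun t => sqrt (f t)) x.
Proof.
  intros H Hp. apply (continuity_pt_comp f sqrt x H). apply continuity_pt_sqrt. lra.
Qed.

Lemma cp_lamE u x : l u x <> 0 -> continuity_pt (lamE u x) 0.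
Proof.
  intros Hn. pose proof (l_pos u x Hn). unfold lamE.
  apply cp_sqrt. apply cp_plus. apply cp_const. apply cp_pow. apply cp_mult. apply cp_id. apply cp_const.
  lra.
Qed.

Ltac cont :=
  match goal with
  | |- continuity_pt (lamE ?u ?x) _ => apply (cp_lamE u x); auto
  | |- continuity_pt (fun _ => ?c) _ => apply cp_const
  | |- continuity_pt (fun t => t) _ => apply cp_id
  | |- continuity_pt (fun t => _ + _) _ => apply cp_plus; cont
  | |- continuity_pt (fun t => _ - _) _ => apply cp_minus; cont
  | |- continuity_pt (fun t => _ * _) _ => apply cp_mult; cont
  | |- continuity_pt (fun t => _ / _) _ => apply cp_div; [cont|cont|]
  | |- continuity_pt (fun t => - _) _ => apply cp_opp; cont
  | |- continuity_pt (fun t => / _) _ => apply cp_inv; [cont|]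
  | |- continuity_pt (fun t => _ ^ _) _ => apply cp_pow; cont
  | |- continuity_pt (fun t => sqrt _) _ => apply cp_sqrt; [cont|]
  | _ => idtac
  end.

Lemma lam0 u x : lamE u x 0 = l u x.
Proof. unfold lamE, l. f_equal. ring. Qed.

Lemma Phi_cont u x : l u x <> 0 -> continuous (Phi u x) 0.
Proof.
  intros Hn. pose proof (l_pos u x Hn) as Hpos.
  apply continuity_pt_filterlim.
  unfold Phi, g1, g2, g3, DlamE, what, DQ, DS. unfold Du, sum3. cbv zeta.
  cont.
  all: cbv beta; rewrite ?lam0; try apply pow_nonzero; auto; try lra.
Qed.

Lemma alg_pb (P Q ll dP dQ : R) : ll <> 0 -> ll * ll = P * P + Q * Q ->
  P / ll * (dP / ll - P * ((2 * P * dP + 2 * Q * dQ) / (2 * ll)) / ll ^ 2)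
  + Q / ll * (dQ / ll - Q * ((2 * P * dP + 2 * Q * dQ) / (2 * ll)) / ll ^ 2) = 0.
Proof.
  intros Hn Hr.
  replace (P / ll * (dP / ll - P * ((2 * P * dP + 2 * Q * dQ) / (2 * ll)) / ll ^ 2)
  + Q / ll * (dQ / ll - Q * ((2 * P * dP + 2 * Q * dQ) / (2 * ll)) / ll ^ 2))
  with ((P * dP + Q * dQ) / ll ^ 2 * (1 - (P * P + Q * Q) / (ll * ll))) by (field; auto).
  rewrite <- Hr. field. auto.
Qed.

Definition aF u x w := Du u x w 2 / l u x - p u x * Dl u x w / l u x ^ 2.
Definition bF u x w := DQ u x w / l u x - q u x * Dl u x w / l u x ^ 2.

Lemma ab_rel u x w : l u x <> 0 -> pbar u x * aF u x w + qbar u x * bF u x w = 0.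
Proof.
  intros Hn. pose proof (l_pos u x Hn).
  unfold aF, bF, pbar, qbar, Dl. apply alg_pb; auto.
  unfold l. rewrite sqrt_sqrt; [ring | nra].
Qed.

Lemma pq1 u x : l u x <> 0 -> pbar u x ^ 2 + qbar u x ^ 2 = 1.
Proof.
  intros Hn. pose proof (l_pos u x Hn).
  assert (Hr : l u x * l u x = p u x ^ 2 + q u x ^ 2) by (unfold l; rewrite sqrt_sqrt; [ring | nra]).
  unfold pbar, qbar. replace 1 with ((p u x ^ 2 + q u x ^ 2) / (l u x * l u x)).
  field. auto. rewrite <- Hr. field. auto.
Qed.

Lemma stepA u x : l u x <> 0 ->
  Phi u x 0 = qbar u x * (qbar u x * aF u x (X1 x) - pbar u x * aF u x (X2 x))
              - pbar u x * (qbar u x * bF u x (X1 x) - pbar u x * bF u x (X2 x)).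
Proof.
  intros Hn. pose proof (l_pos u x Hn) as Hpos.
  unfold Phi, g1, g2, g3, DlamE, what, aF, bF. rewrite !lam0. cbv zeta.
  unfold e1, Dl, DQ, DS. unfold Du, sum3, X1, X2, X3, ev, pbar, qbar. simpl.
  pose proof sqrt2_ne.
  field. auto.
Qed.

Lemma target_eq u (H : C2 u) x : l u x <> 0 ->
  vf_apply X1 (pbar u) x + vf_apply X2 (qbar u) x = Phi u x 0.
Proof.
  intros Hn.
  unfold vf_apply, dir_deriv.
  assert (E1 : Derive (fun t => pbar u (shift x t (X1 x))) 0 = aF u x (X1 x))
    by (apply is_derive_unique; apply line_pbar; auto).
  assert (E2 : Derive (fun t => qbar u (shift x t (X2 x))) 0 = bF u x (X2 x))
    by (apply is_derive_unique; apply line_qbar; auto).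
  rewrite E1, E2, (stepA u x Hn).
  pose proof (ab_rel u x (X1 x) Hn) as h1.
  pose proof (ab_rel u x (X2 x) Hn) as h2.
  pose proof (pq1 u x Hn) as h3.
  set (pb := pbar u x) in *. set (qb := qbar u x) in *.
  set (a1 := aF u x (X1 x)) in *. set (a2 := aF u x (X2 x)) in *.
  set (b1 := bF u x (X1 x)) in *. set (b2 := bF u x (X2 x)) in *.
  replace (qb * (qb * a1 - pb * a2) - pb * (qb * b1 - pb * b2))
    with ((pb ^ 2 + qb ^ 2) * (a1 + b2) - pb * (pb * a1 + qb * b1) - qb * (pb * a2 + qb * b2)) by ring.
  rewrite h1, h2, h3. ring.
Qed.

Lemma lim_isqrt : is_lim (fun L => / sqrt L) p_infty 0.
Proof.
  pose proof (is_lim_sqrt_p (fun L => L) p_infty (is_lim_id p_infty)) as H.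
  pose proof (is_lim_inv (fun L => sqrt L) p_infty p_infty H) as H2.
  simpl in H2. apply H2. discriminate.
Qed.

Theorem proposition6p4 (u : pt -> R) (Hreg : regular_surface u)
  (x : pt) (Hx : u x = 0) (Hnc : l u x <> 0) :
  is_lim (fun L => HL u L x) p_infty
    (Finite (vf_apply X1 (pbar u) x + vf_apply X2 (qbar u) x)).
Proof.
  destruct Hreg as [HC2 _].
  rewrite (target_eq u HC2 x Hnc).
  apply is_lim_ext_loc with (f := fun L => Phi u x (/ sqrt L)).
  - exists 0. intros L HL0. symmetry. apply HL_eq; auto.
  - apply (is_lim_comp_continuous (fun L => / sqrt L) (Phi u x) p_infty 0).
    + exact lim_isqrt.
    + apply Phi_cont. exact Hnc.
Qed.
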